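(* Let $n\ge2$, $m=n-1$, $c\in\mathbb{R}^{m^2}$, and let $\overline{Q}_1$ be the polytope defined by constraints (1)–(8): (1) $\sum_{r=1}^m w_{ir}=1$, $i=1,\dots,m$; (2) $\sum_{i=1}^m w_{ir}=1$, $r=1,\dots,m$; (3) $w_{ir}\ge0$; (4) $y_{0,i}=w_{i,1}$; (5) $y_{i,0}=w_{i,m}$; (6) $w_{ir}+w_{j,r+1}-y_{ij}\le1$ for $i\ne j\in\{1,\dots,m\}$, $r\le m-1$; (7) $\sum_{i=1}^m\sum_{j\ne i,j=1}^m y_{ij}=m-1$; (8) $y_{ij}\ge0$ for all distinct $i,j\in\{0,\dots,m\}$. Then $(w^*,y^* )$ is an optimal solution of the problem $\min\{\sum_{i,r}c_{ir}w_{ir}:(w,y)\in\overline{Q}_1\}$ if and only if $(w^*,y^* )\in\overline{Q}_1$ and $w^*$ is an optimal solution of $\min\{c^t w: w\in\mathcal{A}_n\}$.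
   Context: $\mathcal{A}_n\subseteq\mathbb{R}^{m^2}$ is the linear assignment (Birkhoff) polytope, the set of $w$ satisfying (1)–(3). $y$ is indexed by ordered pairs of distinct elements of $\{0,1,\dots,m\}$. *)

(* Defs.v *)
From HB Require Import structures.
From mathcomp Require Import all_boot all_order all_algebra.
Set Implicit Arguments. Unset Strict Implicit. Unset Printing Implicit Defensive.
Import Order.TTheory GRing.Theory Num.Theory.
Local Open Scope ring_scope.

(* Indexing conventions (m = n - 1):
   - w : 'M[R]_m, entry w i r (i, r : 'I_m, 0-based) is the paper's w_{i+1, r+1}.
   - y : 'M[R]_m.+1, indices 'I_m.+1 = {0,...,m}; index 0 is the paper's 0 and
     the w-index i : 'I_m corresponds to node  lift ord0 i  (value i+1).
     Diagonal entries y a a are not variables of the paper; they are unconstrained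
     and do not appear in the objective. *)

Definition node (m : nat) (i : 'I_m) : 'I_m.+1 := lift ord0 i.

Section Polytopes.
Variable R : realFieldType.
Variable m : nat.

Definition in_assign (w : 'M[R]_m) : Prop :=
  [/\ (forall i : 'I_m, \sum_(r < m) w i r = 1),
      (forall r : 'I_m, \sum_(i < m) w i r = 1) &
      (forall i r : 'I_m, 0 <= w i r)].

Definition in_Q1 (w : 'M[R]_m) (y : 'M[R]_m.+1) : Prop :=
  in_assign w /\ [/\
      (forall i r : 'I_m, val r = 0%N -> y ord0 (node i) = w i r),
      (forall i r : 'I_m, val r = m.-1 -> y (node i) ord0 = w i r),
      (forall i j r s : 'I_m, i != j -> val s = (val r).+1 ->
          w i r + w j s - y (node i) (node j) <= 1),
      (\sum_(i < m) \sum_(j < m | j != i) y (node i) (node j) = (m.-1)%:R) &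
      (forall a b : 'I_m.+1, a != b -> 0 <= y a b)].

Definition cost (c w : 'M[R]_m) : R := \sum_(i < m) \sum_(r < m) c i r * w i r.

Definition optimal_Q1 (c w : 'M[R]_m) (y : 'M[R]_m.+1) : Prop :=
  in_Q1 w y /\ forall w' y', in_Q1 w' y' -> cost c w <= cost c w'.

Definition optimal_assign (c w : 'M[R]_m) : Prop :=
  in_assign w /\ forall w', in_assign w' -> cost c w <= cost c w'.

End Polytopes.

(* Main.v *)
Require Import Defs.
From HB Require Import structures.
From mathcomp Require Import all_boot all_order all_algebra.
From mathcomp Require Import ring lra.
Import Order.TTheory GRing.Theory Num.Theory.
Local Open Scope ring_scope.

Section Aux.
Variable R : realFieldType.
Variable k : nat.
Variable w : 'M[R]_k.+1.
Hypothesis hw : in_assign w.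

Let a (i : 'I_k.+1) (r : nat) := w i (inord r).
Let b (i : 'I_k.+1) (r : nat) := w i (inord r.+1).
Let P (i j : 'I_k.+1) : R := \sum_(r < k) a i r * b j r.
Let D : R := \sum_(r < k) \sum_(i < k.+1) a i r * b i r.
Let j0 : 'I_k.+1 := inord 1.

Definition ymat : 'M[R]_k.+2 := \matrix_(x, z)
  match unlift ord0 x, unlift ord0 z with
  | None, None => 0
  | None, Some j => w j ord0
  | Some i, None => w i ord_max
  | Some i, Some j => P i j + (if (i == ord0) && (j == j0) then D else 0)
  end.

Lemma D_ge0 : 0 <= D.
Proof.
case: hw => _ _ h.
by apply: sumr_ge0 => r _; apply: sumr_ge0 => i _; apply: mulr_ge0; apply: h.
Qed.

Lemma P_ge0 i j : 0 <= P i j.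
Proof. case: hw => _ _ h. by apply: sumr_ge0 => r _; apply: mulr_ge0; apply: h. Qed.

Lemma sumP : \sum_(i < k.+1) \sum_(j < k.+1 | j != i) P i j = k%:R - D.
Proof.
case: hw => _ hc _.
have colb : forall (r : 'I_k) i, \sum_(j < k.+1 | j != i) b j r = 1 - b i r.
  move=> r i; move: (hc (inord r.+1)); rewrite (bigD1 i) //= /b => h; lra.
transitivity (\sum_(i < k.+1) \sum_(r < k) (a i r - a i r * b i r)).
  apply: eq_bigr => i _; rewrite exchange_big /=; apply: eq_bigr => r _.
  by rewrite -big_distrr /= colb mulrBr mulr1.
rewrite exchange_big /= /D.
transitivity (\sum_(j < k) (1 - \sum_(i < k.+1) a i j * b i j)).
  apply: eq_bigr => r _; rewrite sumrB; congr (_ - _); exact: hc.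
by rewrite sumrB sumr_const card_ord.
Qed.

Lemma sumE : \sum_(i < k.+1) \sum_(j < k.+1 | j != i)
   (if (i == ord0) && (j == j0) then D else 0) = D.
Proof.
have [Dz|hne] : D = 0 \/ (ord0 : 'I_k.+1) != j0.
  case: (posnP k) => hk; [left|right].
    by apply: big1 => r _; by case: r => r hr; exfalso; move: hr; rewrite hk.
  by apply/eqP => /(congr1 val); rewrite /j0 /= inordK.
  rewrite Dz; apply: big1 => i _; apply: big1 => j _; by case: ifP.
rewrite (bigD1 ord0) //= [X in _ + X]big1 ?addr0; last first.
  move=> i /negbTE hi; apply: big1 => j _; by rewrite hi.
rewrite (bigD1 j0) /=; last by rewrite eq_sym.
rewrite !eqxx /= big1 ?addr0 // => j /andP [_ /negbTE ->]. by [].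
Qed.

Lemma exists_y : exists y, in_Q1 w y.
Proof.
exists ymat; split => //; case: (hw) => hr hc hp.
have nodeE : forall i : 'I_k.+1, unlift ord0 (node i) = Some i.
  by move=> i; rewrite /node liftK.
have u0 : unlift ord0 (ord0 : 'I_k.+2) = None by rewrite unlift_none.
split.
- move=> i r r0; rewrite mxE nodeE u0; congr (w i _); exact: val_inj.
- move=> i r r0; rewrite mxE nodeE u0; congr (w i _); exact: val_inj.
- move=> i j r s _ hs; rewrite mxE !nodeE.
  have rk : (r < k)%N by have := ltn_ord s; rewrite hs.
  have ar : a i (Ordinal rk) = w i r by rewrite /a inord_val.
  have bs : b j (Ordinal rk) = w j s.
    by rewrite /b -hs inord_val.
  have h1 : w i r * w j s <= P i j.
    rewrite /P (bigD1 (Ordinal rk)) //= ar bs lerDl.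
    by apply: sumr_ge0 => x _; apply: mulr_ge0; apply: hp.
  have h2 : 0 <= (if (i == ord0) && (j == j0) then D else 0).
    by case: ifP => _ //; exact: D_ge0.
  have h3 : w i r + w j s - 1 <= w i r * w j s.
    have : 0 <= (1 - w i r) * (1 - w j s).
      apply: mulr_ge0; rewrite subr_ge0.
      + by rewrite -(hr i) (bigD1 r) //= lerDl sumr_ge0.
      + by rewrite -(hr j) (bigD1 s) //= lerDl sumr_ge0.
    by rewrite mulrBl !mulrBr !mul1r mulr1 => h; lra.
  move: h1 h2 h3; set e := (if _ then _ else _); set p := P i j; move=> *; lra.
- transitivity (\sum_(i < k.+1) \sum_(j < k.+1 | j != i)
     (P i j + (if (i == ord0) && (j == j0) then D else 0))).
    by apply: eq_bigr => i _; apply: eq_bigr => j _; rewrite mxE !nodeE.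
  rewrite (eq_bigr (fun i => \sum_(j < k.+1 | j != i) P i j +
      \sum_(j < k.+1 | j != i) (if (i == ord0) && (j == j0) then D else 0)));
    last by move=> i _; rewrite big_split.
  by rewrite big_split /= sumP sumE subrK.
- move=> x z hxz; rewrite mxE.
  case ex: (unlift ord0 x) => [i|]; case ez: (unlift ord0 z) => [j|] //.
  + apply: addr_ge0; first exact: P_ge0. by case: ifP => _ //; exact: D_ge0.
Qed.
End Aux.

Theorem lemma3 (R : realFieldType) (n : nat) (hn : (2 <= n)%N)
    (c w : 'M[R]_(n.-1)) (y : 'M[R]_((n.-1).+1)) :
  optimal_Q1 c w y <-> in_Q1 w y /\ optimal_assign c w.
Proof.
split.
- case=> hq hopt; split => //; split; first by case: hq.
  case: n hn c w y hq hopt => [|[|k]] // _ c w y hq hopt w' hw'.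
  have [y' hy'] := @exists_y _ _ w' hw'; exact: hopt hy'.
- case=> hq [_ hopt]; split => // w' y' [hw' _]; exact: hopt.
Qed.
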